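(* Let $S$ be a connected shape in the triangular grid with at least two points, and let $v \in S$. Then $v$ is erodable with respect to $S$ if and only if $v$ has exactly one local boundary $B$ in $S$ and $B$ is a local outer boundary.
   Context: The triangular grid $G$ has as vertices (''points'') the points of the regular triangular lattice in the plane, two points adjacent iff at unit distance; each point has six incident edges, cyclically ordered clockwise. A shape is a finite set of points, identified with its induced subgraph. A connected shape $S$ partitions the plane into faces; the unique unbounded one is the outer face, and a bounded face containing a grid point not in $S$ is a hole. The outer boundary of $S$ is the set of points of $S$ lying on the boundary of the outer face. A boundary point of $S$ is a point of $S$ adjacent to some point not in $S$. For a boundary point $v$, a local boundary of $v$ (w.r.t. $S$) is a maximal clockwise cyclic interval of consecutive edges incident to $v$ whose other endpoints are not in $S$; it is a local outer boundary if these other endpoints lie in the outer face of $S$. A point $v \in S$ is redundant if the subgraph induced by the neighbors of $v$ in $S$ is connected (i.e., removing $v$ does not disconnect its 1-hop neighborhood in $S$). A point is erodable w.r.t. $S$ if it is redundant and lies on the outer boundary of $S$. *)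

(* Defs.v *)
From mathcomp Require Import all_boot all_algebra.
From mathcomp Require Import finmap.
Set Implicit Arguments. Unset Strict Implicit. Unset Printing Implicit Defensive.
Import GRing.Theory Num.Theory.
Local Open Scope fset_scope.

(* Points of the triangular lattice in axial coordinates:
   (a, b) denotes a * e1 + b * e2 with e1 = (1,0), e2 = (1/2, sqrt3/2). *)
Definition point := (int * int)%type.

(* The six unit directions, listed in CLOCKWISE cyclic order
   (0deg, -60deg, -120deg, 180deg, 120deg, 60deg). *)
Definition dir (d : 'I_6) : point :=
  match val d with
  | 0 => (Posz 1, Posz 0)
  | 1 => (Posz 1, (- Posz 1)%R)
  | 2 => (Posz 0, (- Posz 1)%R)
  | 3 => ((- Posz 1)%R, Posz 0)
  | 4 => ((- Posz 1)%R, Posz 1)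
  | _ => (Posz 0, Posz 1)
  end.

Definition nb (p : point) (d : 'I_6) : point :=
  ((p.1 + (dir d).1)%R, (p.2 + (dir d).2)%R).

Definition adj (p q : point) : bool := [exists d : 'I_6, q == nb p d].

Definition gpath (P : pred point) (x y : point) : Prop :=
  exists s : seq point, [/\ path adj x s, last x s = y & all P (x :: s)].

Definition connected_set (A : {fset point}) : Prop :=
  forall x y, x \in A -> y \in A -> gpath (fun z => z \in A) x y.

(* A grid point q not in S lies in the outer (unbounded) face of S:
   it is joined, avoiding S, to grid points arbitrarily far away. *)
Definition in_outer_face (S : {fset point}) (q : point) : Prop :=
  q \notin S /\
  forall N : nat, exists r : point,
    (N < `|r.1|%N + `|r.2|%N)%N /\ gpath (fun z => z \notin S) q r.

Definition on_outer_boundary (S : {fset point}) (v : point) : Prop :=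
  v \in S /\ exists d : 'I_6, in_outer_face S (nb v d).

Definition nbhd (S : {fset point}) (v : point) : {fset point} :=
  [fset q in S | adj v q].

Definition redundant (S : {fset point}) (v : point) : Prop :=
  v \in S /\ connected_set (nbhd S v).

Definition erodable (S : {fset point}) (v : point) : Prop :=
  redundant S v /\ on_outer_boundary S v.

(* cyclic intervals of consecutive (clockwise) edge indices:
   {i, i+1, ..., i+k-1} mod 6 with 1 <= k <= 6 *)
Definition cyc_interval (B : {set 'I_6}) : Prop :=
  exists (i : 'I_6) (k : nat),
    (0 < k <= 6)%N /\ B = [set j : 'I_6 | ((j + 6 - i) %% 6 < k)%N].

Definition free_dirs (S : {fset point}) (v : point) (B : {set 'I_6}) : Prop :=
  forall d, d \in B -> nb v d \notin S.

Definition local_boundary (S : {fset point}) (v : point) (B : {set 'I_6}) : Prop :=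
  [/\ cyc_interval B, free_dirs S v B &
      forall B', cyc_interval B' -> B \subset B' -> free_dirs S v B' -> B' = B].

Definition local_outer_boundary (S : {fset point}) (v : point) (B : {set 'I_6}) : Prop :=
  local_boundary S v B /\ forall d, d \in B -> in_outer_face S (nb v d).

(* Main.v *)
Require Import Defs.
From mathcomp Require Import all_boot all_algebra.
From mathcomp Require Import finmap.
From Stdlib Require Import FunctionalExtensionality Lia.
From mathcomp Require Import zify.
Set Implicit Arguments. Unset Strict Implicit. Unset Printing Implicit Defensive.
Local Open Scope fset_scope.

Definition od (n : nat) : 'I_6 := Ordinal (ltn_pmod n (erefl true : (0 < 6)%N)).
Definition succ (d : 'I_6) := od (d + 1).
Definition pred6 (d : 'I_6) := od (d + 5).
Definition adjb (d e : 'I_6) := (e == succ d) || (d == succ e).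
Definition I6 := map od (iota 0 6).
Definition allI (P : 'I_6 -> bool) := all P I6.
Definition exI (P : 'I_6 -> bool) := has P I6.
Definition intb (i : 'I_6) (k : nat) (j : 'I_6) : bool := ((j + 6 - i) %% 6 < k)%N.

Lemma od_ord (d : 'I_6) : od d = d.
Proof. by apply: val_inj; rewrite /= modn_small. Qed.

Lemma in_I6 d : d \in I6.
Proof. rewrite -[d]od_ord /I6. apply: (map_f od). by rewrite mem_iota add0n ltn_ord. Qed.

Lemma allIP P : allI P -> forall d, P d.
Proof. move/allP=> H d; exact: H (in_I6 d). Qed.

Arguments allIP {P}.
Lemma exIP P : exI P -> exists d, P d.
Proof. by case/hasP=> d _ H; exists d. Qed.

Lemma od_succ n : succ (od n) = od n.+1.
Proof. by apply: val_inj; rewrite /= modnDml addn1. Qed.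

Lemma G2b : allI (fun d => allI (fun e => allI (fun d' =>
  (((dir e).1 == (dir d).1 + (dir d').1)%R && ((dir e).2 == (dir d).2 + (dir d').2)%R) ==> adjb d e))).
Proof. by vm_compute. Qed.

Lemma G3f : allI (fun d => dir (succ d) == (((dir d).1 + (dir (od (d+2))).1)%R, ((dir d).2 + (dir (od (d+2))).2)%R)).
Proof. by vm_compute. Qed.
Lemma G3b : allI (fun d => dir d == (((dir (succ d)).1 + (dir (od (d+5))).1)%R, ((dir (succ d)).2 + (dir (od (d+5))).2)%R)).
Proof. by vm_compute. Qed.
Lemma dir_injb : allI (fun d => allI (fun e => (dir d == dir e) ==> (d == e))).
Proof. by vm_compute. Qed.
Lemma M1 : allI (fun i => allI (fun j => od (i + (j + 6 - i) %% 6) == j)).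
Proof. by vm_compute. Qed.
Lemma M2b : allI (fun i => all (fun t => ((od (i+t) + 6 - i) %% 6 == t)%N) (iota 0 6)).
Proof. by vm_compute. Qed.
Lemma Compb : allI (fun i => all (fun k => allI (fun j => (~~ intb i k j) == intb (od (i+k)) (6-k) j)) (iota 1 5)).
Proof. by vm_compute. Qed.
Lemma ILb : allI (fun i => all (fun k => allI (fun i' => all (fun k' =>
   allI (fun j => intb i k j ==> intb i' k' j) ==> ~~ intb i' k' (pred6 i) ==> ~~ intb i' k' (od (i+k)) ==>
   allI (fun j => intb i' k' j == intb i k j)) (iota 1 6))) (iota 1 5)).
Proof. by vm_compute. Qed.
Arguments exIP {P}.

Section Pat.
Variable o : 'I_6 -> bool.
Definition freeI i k := allI (fun j => intb i k j ==> ~~ o j).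
Definition run i k := [&& (0 < k < 6)%N, freeI i k, o (pred6 i) & o (od (i + k))].
Definition runlen (i : 'I_6) := find (fun t => o (od (i + t))) (iota 0 6).
Definition occlen (c : 'I_6) := find (fun t => ~~ o (od (c + t))) (iota 0 6).
Definition sec (i : 'I_6) := od (i + runlen i +
   find (fun t => ~~ o (od (i + runlen i + t)) && o (od (i + runlen i + t + 5))) (iota 0 6)).
Definition closedQ (Q : pred 'I_6) := allI (fun d => allI (fun e => Q d ==> o e ==> adjb d e ==> Q e)).
Definition BF1b := exI o ==> exI (fun d => ~~ o d) ==> exI (fun i => ~~ o i && o (pred6 i)).
Definition BF2b := allI (fun i => (~~ o i && o (pred6 i)) ==>
  (run i (runlen i) &&
   (allI (fun j => intb i (runlen i) j == ~~ o j) ||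
    [&& run (sec i) (runlen (sec i)),
        exI (fun j => intb i (runlen i) j != intb (sec i) (runlen (sec i)) j),
        intb (od (i + runlen i)) (occlen (od (i + runlen i))) (od (i + runlen i)),
        ~~ intb (od (i + runlen i)) (occlen (od (i + runlen i))) (pred6 i) &
        closedQ (intb (od (i + runlen i)) (occlen (od (i + runlen i))))]))).
End Pat.

Definition pat (b0 b1 b2 b3 b4 b5 : bool) (d : 'I_6) : bool := nth false [:: b0; b1; b2; b3; b4; b5] d.

Lemma patE (o : 'I_6 -> bool) : o = pat (o (od 0)) (o (od 1)) (o (od 2)) (o (od 3)) (o (od 4)) (o (od 5)).
Proof.
apply: functional_extensionality => d; rewrite -[d]od_ord.
by case: d => [[|[|[|[|[|[|n]]]]]] Hd].
Qed.

Lemma BF1 o : BF1b o.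
Proof.
rewrite (patE o).
by case: (o (od 0)); case: (o (od 1)); case: (o (od 2)); case: (o (od 3)); case: (o (od 4)); case: (o (od 5)); vm_compute.
Qed.

Lemma BF2 o : BF2b o.
Proof.
rewrite (patE o).
by case: (o (od 0)); case: (o (od 1)); case: (o (od 2)); case: (o (od 3)); case: (o (od 4)); case: (o (od 5)); vm_compute.
Qed.

Lemma adj_nb v d : adj v (nb v d).
Proof. by apply/existsP; exists d. Qed.

Lemma adjP v q : adj v q -> exists d, q = nb v d.
Proof. by case/existsP=> d /eqP ->; exists d. Qed.

Lemma adj_mk v d e d' :
  dir e = (((dir d).1 + (dir d').1)%R, ((dir d).2 + (dir d').2)%R) -> adj (nb v d) (nb v e).
Proof.
move=> E; apply/existsP; exists d'; rewrite /nb E /=.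
by rewrite !GRing.addrA.
Qed.

Lemma adj_inv v d e : adj (nb v d) (nb v e) -> adjb d e.
Proof.
case/existsP=> d' /eqP [E1 E2].
move: E1 E2; rewrite -!GRing.addrA => /GRing.addrI E1 /GRing.addrI E2.
have := allIP (allIP (allIP G2b d) e) d'.
by rewrite E1 E2 !eqxx.
Qed.

Lemma nb_inj v d e : nb v d = nb v e -> d = e.
Proof.
case=> /GRing.addrI E1 /GRing.addrI E2.
have := allIP (allIP dir_injb d) e.
have -> : dir d = dir e by case: (dir d) (dir e) E1 E2 => [? ?] [? ?] /= -> ->.
by rewrite eqxx => /eqP.
Qed.

Lemma adj_succ v d : adj (nb v d) (nb v (succ d)).
Proof. apply: (@adj_mk _ _ _ (od (d + 2))); exact/eqP/(allIP G3f). Qed.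

Lemma adj_succ' v d : adj (nb v (succ d)) (nb v d).
Proof. apply: (@adj_mk _ _ _ (od (d + 5))); exact/eqP/(allIP G3b). Qed.

Lemma gpath_refl (P : pred point) x : P x -> gpath P x x.
Proof. by move=> Px; exists [::]; rewrite /= Px. Qed.

Lemma gpath_step (P : pred point) x y : P x -> P y -> adj x y -> gpath P x y.
Proof. by move=> Px Py a; exists [:: y]; rewrite /= Px Py a. Qed.

Lemma gpath_cat (P : pred point) x y z : gpath P x y -> gpath P y z -> gpath P x z.
Proof.
case=> s1 [p1 l1 a1] [s2 [p2 l2 a2]]; exists (s1 ++ s2).
rewrite cat_path last_cat l1 p1 p2 l2; split => //.
rewrite /= all_cat; move: a1 a2 => /= /andP [-> ->] /andP [_ ->]; done.
Qed.

Lemma gpath_last (P : pred point) x y : gpath P x y -> P y.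
Proof. case=> s [_ <- /allP]; apply; exact: mem_last. Qed.

Lemma gpath_first (P : pred point) x y : gpath P x y -> P x.
Proof. by case=> s [_ _ /andP []]. Qed.

Lemma outer_step S q q' : in_outer_face S q -> q' \notin S -> adj q' q -> in_outer_face S q'.
Proof.
case=> qS H q'S a; split => // N; have [r [Hr g]] := H N; exists r; split => //.
apply: gpath_cat g; exact: gpath_step.
Qed.

Lemma propag (G : pred 'I_6) (P : 'I_6 -> Prop) (i : 'I_6) k :
  (forall t, (t < k)%N -> G (od (i + t))) ->
  (forall d, P d -> G (succ d) -> P (succ d)) ->
  (forall d, P (succ d) -> G d -> P d) ->
  forall a b, (a < k)%N -> (b < k)%N -> P (od (i + a)) -> P (od (i + b)).
Proof.
move=> HG Hf Hb a b ak bk Pa.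
have fwd : forall t, (a + t < k)%N -> P (od (i + (a + t))).
  elim=> [|t IH] h; first by rewrite addn0.
  rewrite addnS addnS -od_succ; apply: Hf; first by apply: IH; lia.
  by rewrite od_succ -addnS -addnS; apply: HG.
have bwd : forall t, (t <= a)%N -> P (od (i + (a - t))).
  elim=> [|t IH] h; first by rewrite subn0.
  apply: Hb; last by apply: HG; lia.
  by rewrite od_succ -addnS subnSK //; apply: IH; lia.
case: (leqP a b) => ab.
  by rewrite -(subnKC ab); apply: fwd; rewrite subnKC.
by rewrite -(subKn (ltnW ab)); apply: bwd; exact: leq_subr.
Qed.

Lemma M2 (i : 'I_6) t k : (t < 6)%N -> intb i k (od (i + t)) = (t < k)%N.
Proof.
move=> t6; have := allP (allIP M2b i) t; rewrite mem_iota add0n t6 => /(_ isT) /eqP.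
by rewrite /intb => ->.
Qed.

Lemma M1' (i j : 'I_6) : od (i + (j + 6 - i) %% 6) = j.
Proof. exact/eqP/(allIP (allIP M1 i)). Qed.

Definition occ (S : {fset point}) v d := nb v d \in S.

Lemma nbhdE S v q : (q \in nbhd S v) = (q \in S) && adj v q.
Proof. by rewrite /nbhd !inE. Qed.

Lemma exIP' (P : pred 'I_6) d : P d -> exI P.
Proof. by move=> h; apply/hasP; exists d => //; exact: in_I6. Qed.

Lemma IL (i i' : 'I_6) k k' : (0 < k < 6)%N -> (0 < k' <= 6)%N ->
  (forall j, intb i k j -> intb i' k' j) -> ~~ intb i' k' (pred6 i) -> ~~ intb i' k' (od (i+k)) ->
  forall j, intb i' k' j = intb i k j.
Proof.
move=> hk hk' H1 H2 H3 j.
have hk1 : k \in iota 1 5 by rewrite mem_iota; lia.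
have hk2 : k' \in iota 1 6 by rewrite mem_iota; lia.
have A : allI (fun j => intb i k j ==> intb i' k' j) by apply/allP => j' _; apply/implyP; exact: H1.
have := allP (allIP (allP (allIP ILb i) k hk1) i') k' hk2.
rewrite A (negbTE H2) (negbTE H3) /= => /allIP/(_ j)/eqP; done.
Qed.

Lemma Comp (i j : 'I_6) k : (0 < k < 6)%N -> ~~ intb i k j = intb (od (i+k)) (6-k) j.
Proof.
move=> hk; have hk1 : k \in iota 1 5 by rewrite mem_iota; lia.
have h := allP (allIP Compb i) k hk1; move: h => /= /allIP h. exact: (eqP (h j)).
Qed.

Lemma run_lb S v i k : run (occ S v) i k -> local_boundary S v [set j | intb i k j].
Proof.
case/and4P=> /andP[k0 k6] fr op oi.
split.
- exists i, k; split => //; by rewrite k0 ltnW.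
- by move=> d; rewrite inE => h; exact: (implyP (allIP fr d) h).
- move=> B' [i' [k' [hk' EB']]] sub fr'; subst B'.
  apply/setP=> j; rewrite !inE; apply: IL => //; first by rewrite k0.
  + by move=> j' h; have := subsetP sub j'; rewrite !inE; apply.
  + by apply/negP => h; have := fr' (pred6 i); rewrite inE => /(_ h); rewrite /occ in op; rewrite op.
  + by apply/negP => h; have := fr' (od (i + k)); rewrite inE => /(_ h); rewrite /occ in oi; rewrite oi.
Qed.

Lemma inv_path S v (Q : pred 'I_6) :
  (forall d e, Q d -> occ S v e -> adjb d e -> Q e) ->
  forall s x, path adj x s -> all (fun z => z \in nbhd S v) (x :: s) ->
  (exists2 e, x = nb v e & Q e) -> exists2 e, last x s = nb v e & Q e.
Proof.
move=> cl; elim=> [|y s IH] x //= /andP[xy p] /andP[_ /andP[yN aN]] [e xe Qe].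
apply: IH => //; first by rewrite /= yN.
move: (yN); rewrite nbhdE => /andP[yS /adjP[e' ye']].
exists e' => //; apply: cl Qe _ _; first by rewrite /occ -ye'.
by apply: (@adj_inv v); rewrite -xe -ye'.
Qed.

Theorem proposition2p2 (S : {fset point}) (v : point) :
  connected_set S -> (2 <= #|` S|)%N -> v \in S ->
  (erodable S v <->
   exists B : {set 'I_6},
     local_boundary S v B /\
     (forall B', local_boundary S v B' -> B' = B) /\
     local_outer_boundary S v B).
Proof.
move=> Sconn S2 vS.
have hocc : exists d, occ S v d.
  have : S `\ v != fset0.
    by apply/eqP => E; move: S2; rewrite (cardfsD1 v) vS E cardfs0.
  case/fset0Pn => y; rewrite !inE => /andP[yv yS].
  have [s [p l a]] := Sconn v y vS yS.
  case: s p l a => [|x s] /=; first by move=> _ E; rewrite E eqxx in yv.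
  move=> /andP[vx _] _ /andP[_ /andP[xS _]].
  by have [d xd] := adjP vx; exists d; rewrite /occ -xd.
have key : forall d0, ~~ occ S v d0 -> exists i, ~~ occ S v i && occ S v (pred6 i).
  move=> d0 fd0; have [d hd] := hocc.
  have := BF1 (occ S v); rewrite /BF1b (exIP' hd) (exIP' (P := fun d => ~~ occ S v d) fd0) /=.
  by move/exIP.
split.
- move=> [[_ Hconn] [_ [d0 Hout]]].
  have fd0 : ~~ occ S v d0 by case: Hout.
  have [i Hi] := key d0 fd0.
  have /andP[Hrun Hdich] := implyP (allIP (BF2 (occ S v)) i) Hi.
  move: Hrun Hdich; set k := runlen (occ S v) i => Hrun Hdich.
  case/orP: Hdich => [Hint | /and5P[Hrun2 Hdiff Qa Qb Qcl]]; last first.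
    exfalso.
    have Na : nb v (od (i + k)) \in nbhd S v.
      by rewrite nbhdE adj_nb andbT; case/and4P: Hrun.
    have Nb : nb v (pred6 i) \in nbhd S v.
      by rewrite nbhdE adj_nb andbT; case/andP: Hi.
    have [s [p l a]] := Hconn _ _ Na Nb.
    have cl : forall d e, intb (od (i + k)) (occlen (occ S v) (od (i + k))) d -> occ S v e -> adjb d e ->
                 intb (od (i + k)) (occlen (occ S v) (od (i + k))) e.
      move=> d e qd oe ad; have := allIP (allIP Qcl d) e.
      by rewrite qd oe ad.
    have [e le Qe] := inv_path cl p a (ex_intro2 _ _ (od (i + k)) erefl Qa).
    rewrite l in le; move/nb_inj: le => le; subst e.
    by rewrite Qe in Qb.
  have Hint' : forall j, intb i k j = ~~ occ S v j by move=> j; exact: (eqP (allIP Hint j)).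
  have k6 : (k < 6)%N by case/and4P: Hrun => /andP[].
  have LB := run_lb Hrun.
  exists [set j | intb i k j]; split => //; split.
  + move=> B' [cB' fr' mx']; apply/esym; apply: mx'.
    * by case: LB.
    * by apply/subsetP => j jB; rewrite inE Hint'; exact: fr' j jB.
    * by case: LB.
  + split => // d; rewrite inE => dk.
    have HG : forall t, (t < k)%N -> ~~ occ S v (od (i + t)).
      by move=> t tk; rewrite -Hint' M2 //; lia.
    have := @propag (fun d => ~~ occ S v d) (fun d => in_outer_face S (nb v d)) i k HG _ _
        ((d0 + 6 - i) %% 6) ((d + 6 - i) %% 6).
    rewrite !M1'; apply => //.
    * by move=> d' Pd' Gd'; apply: outer_step Pd' Gd' (adj_succ' v d').
    * by move=> d' Pd' Gd'; apply: outer_step Pd' Gd' (adj_succ v d').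
    * by have := Hint' d0; rewrite fd0.
- case=> B [[[i0 [k0 [hk0 EB]]] frB _] [uniq [_ Hout]]].
  have i0B : i0 \in B by rewrite EB inE addKn modnn; case/andP: hk0.
  have fd0 : ~~ occ S v i0 := frB i0 i0B.
  have [i Hi] := key i0 fd0.
  have /andP[Hrun Hdich] := implyP (allIP (BF2 (occ S v)) i) Hi.
  move: Hrun Hdich; set k := runlen (occ S v) i => Hrun Hdich.
  case/orP: Hdich => [Hint | /and5P[Hrun2 Hdiff Qa Qb Qcl]]; last first.
    exfalso.
    have E1 := uniq _ (run_lb Hrun); have E2 := uniq _ (run_lb Hrun2).
    have [j hj] := exIP Hdiff.
    have E3 := etrans E1 (esym E2).
    move/setP: E3 => /(_ j); rewrite !inE => E3.
    by rewrite E3 eqxx in hj.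
  have Hint' : forall j, intb i k j = ~~ occ S v j by move=> j; exact: (eqP (allIP Hint j)).
  have hk : (0 < k < 6)%N by case/and4P: Hrun.
  split; last by split => //; exists i0; exact: Hout i0 i0B.
  split => // x y; rewrite !nbhdE => /andP[xS /adjP [a xa]] /andP[yS /adjP[b yb]]; subst x y.
  set c := od (i + k); set m := 6 - k.
  have Co : forall j, occ S v j = intb c m j by move=> j; rewrite -Comp // Hint' negbK.
  have HG : forall t, (t < m)%N -> occ S v (od (c + t)) by move=> t tm; rewrite Co M2 //; lia.
  have m0 : (0 < m)%N by rewrite /m; lia.
  have Nd : forall d, occ S v d -> nb v d \in nbhd S v by move=> d h; rewrite nbhdE adj_nb andbT.
  have ta : ((a + 6 - c) %% 6 < m)%N by have := Co a; rewrite /occ xS.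
  have tb : ((b + 6 - c) %% 6 < m)%N by have := Co b; rewrite /occ yS.
  have Pc : nb v c \in nbhd S v by apply: Nd; have := HG 0 m0; rewrite addn0 od_ord.
  apply: (@gpath_cat _ _ (nb v c)).
  + have := @propag (fun d => occ S v d) (fun d => gpath (fun z => z \in nbhd S v) (nb v d) (nb v c)) c m HG _ _
        0 ((a + 6 - c) %% 6).
    rewrite !M1' addn0 od_ord; apply => //.
    * move=> d' Pd' Gd'; have N1 := gpath_first Pd'.
      exact: gpath_cat (gpath_step (Nd _ Gd') N1 (adj_succ' v d')) Pd'.
    * move=> d' Pd' Gd'; have N1 := gpath_first Pd'.
      exact: gpath_cat (gpath_step (Nd _ Gd') N1 (adj_succ v d')) Pd'.
    * exact: gpath_refl Pc.
  + have := @propag (fun d => occ S v d) (fun d => gpath (fun z => z \in nbhd S v) (nb v c) (nb v d)) c m HG _ _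
        0 ((b + 6 - c) %% 6).
    rewrite !M1' addn0 od_ord; apply => //.
    * move=> d' Pd' Gd'; have N1 := gpath_last Pd'.
      exact: gpath_cat Pd' (gpath_step N1 (Nd _ Gd') (adj_succ v d')).
    * move=> d' Pd' Gd'; have N1 := gpath_last Pd'.
      exact: gpath_cat Pd' (gpath_step N1 (Nd _ Gd') (adj_succ' v d')).
    * exact: gpath_refl Pc.
Qed.
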